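(* Let $p\in\Delta_n$ be a probability distribution on $\{1,\dots,n\}$ and let $\rho>0$ satisfy $\|p\|_2\le\sqrt2\,\rho$. Let $Q$ be a positive integer such that $$3\left[2^{7/4}Q^{-1/2}\rho^{3/2}+2Q^{-1}\rho\right]\le\tfrac13\rho^2 .$$ Let $\xi,\xi'$ be the empirical distributions of two disjoint (consecutive) segments, of cardinality $Q$ each, of an i.i.d. sample drawn from $p$. Then $$\mathbb P\left\{\left|\xi^T\xi'-\|p\|_2^2\right|>\tfrac13\rho^2\right\}\le\tfrac13 .$$
   Context: $\Delta_n=\{r\in\mathbb{R}^n:r\ge0,\sum_ir_i=1\}$. The empirical distribution of a set of observations with values in $\{1,\dots,n\}$ is the vector whose $i$-th entry is the fraction of observations equal to $i$. *)

(* Defs.v *)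
From HB Require Import structures.
From mathcomp Require Import all_boot all_order all_algebra.
From mathcomp Require Import reals exp.
Set Implicit Arguments. Unset Strict Implicit. Unset Printing Implicit Defensive.
Import Order.TTheory GRing.Theory Num.Theory.
Local Open Scope ring_scope.

Definition in_simplex (R : realType) (n : nat) (p : 'I_n -> R) : Prop :=
  (forall i, 0 <= p i) /\ \sum_(i < n) p i = 1.

Definition norm2 (R : realType) (n : nat) (p : 'I_n -> R) : R :=
  Num.sqrt (\sum_(i < n) p i ^+ 2).

Definition empirical (R : realType) (n Q : nat) (x : {ffun 'I_Q -> 'I_n})
  : 'I_n -> R :=
  fun i => #|[set k | x k == i]|%:R / Q%:R.

Definition dotp (R : realType) (n : nat) (u v : 'I_n -> R) : R :=
  \sum_(i < n) u i * v i.

(* Probability, under an i.i.d. sample of size 2Q drawn from p, split into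
   the two consecutive segments x (first Q draws) and y (next Q draws),
   of the event E x y. *)
Definition iid_pair_prob (R : realType) (n Q : nat) (p : 'I_n -> R)
  (E : {ffun 'I_Q -> 'I_n} -> {ffun 'I_Q -> 'I_n} -> bool) : R :=
  \sum_(x : {ffun 'I_Q -> 'I_n}) \sum_(y : {ffun 'I_Q -> 'I_n} | E x y)
     (\prod_(k < Q) p (x k)) * (\prod_(k < Q) p (y k)).

(* Main.v *)
Require Import Defs.
From HB Require Import structures.
From mathcomp Require Import all_boot all_order all_algebra.
From mathcomp Require Import reals exp.
From mathcomp Require Import ring lra.
Import Order.TTheory GRing.Theory Num.Theory.
Set Implicit Arguments. Unset Strict Implicit.
Local Open Scope ring_scope.

Definition W (R : realType) n Q (p : 'I_n -> R) (x : {ffun 'I_Q -> 'I_n}) : R :=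
  \prod_(k < Q) p (x k).

Lemma sum_prodh (R : realType) n Q (p : 'I_n -> R) (h : 'I_Q -> 'I_n -> R) :
  \sum_(x : {ffun 'I_Q -> 'I_n}) W p x * \prod_(l < Q) h l (x l)
  = \prod_(l < Q) \sum_(j < n) p j * h l j.
Proof. rewrite bigA_distr_bigA /=; apply: eq_bigr => x _; by rewrite /W -big_split. Qed.

Lemma prod_if1 (R : realType) Q (k : 'I_Q) (F : 'I_Q -> R) :
  \prod_(l < Q) (if l == k then F l else 1) = F k.
Proof. by rewrite -big_mkcond big_pred1_eq. Qed.

Lemma sum_delta (R : realType) n (i : 'I_n) (F : 'I_n -> R) :
  \sum_(j < n) F j * (j == i)%:R = F i.
Proof.
rewrite (bigD1 i) //= eqxx mulr1 big1 ?addr0 // => j /negbTE ->; by rewrite mulr0.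
Qed.

Lemma sum_one (R : realType) n Q (p : 'I_n -> R) (hp : \sum_(j < n) p j = 1)
  (k : 'I_Q) (g : 'I_n -> R) :
  \sum_(x : {ffun 'I_Q -> 'I_n}) W p x * g (x k) = \sum_(j < n) p j * g j.
Proof.
have := sum_prodh p (fun l v => if l == k then g v else 1).
rewrite (eq_bigr (fun x => W p x * g (x k))); last first.
  by move=> x _; rewrite (prod_if1 k (fun l => g (x l))).
move=> ->.
rewrite (eq_bigr (fun l => if l == k then \sum_(j < n) p j * g j else 1)).
  by rewrite (prod_if1 k (fun _ => \sum_(j < n) p j * g j)).
move=> l _; case: (l == k) => //.
by rewrite -[RHS]hp; apply: eq_bigr => j _; rewrite mulr1.
Qed.

Lemma sum_two (R : realType) n Q (p : 'I_n -> R) (hp : \sum_(j < n) p j = 1)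
  (k k' : 'I_Q) (kk : k != k') (g h : 'I_n -> R) :
  \sum_(x : {ffun 'I_Q -> 'I_n}) W p x * (g (x k) * h (x k'))
  = (\sum_(j < n) p j * g j) * (\sum_(j < n) p j * h j).
Proof.
have := sum_prodh p (fun l v => (if l == k then g v else 1) * (if l == k' then h v else 1)).
rewrite (eq_bigr (fun x => W p x * (g (x k) * h (x k')))); last first.
  by move=> x _; rewrite big_split /= (prod_if1 k (fun l => g (x l)))
     (prod_if1 k' (fun l => h (x l))).
move=> ->.
rewrite (eq_bigr (fun l => (if l == k then \sum_(j < n) p j * g j else 1)
                * (if l == k' then \sum_(j < n) p j * h j else 1))).
  by rewrite big_split /= (prod_if1 k (fun _ => \sum_(j < n) p j * g j))
     (prod_if1 k' (fun _ => \sum_(j < n) p j * h j)).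
move=> l _; case: (eqVneq l k) => [->|lk].
  rewrite (negbTE kk) mulr1; by apply: eq_bigr => j _; rewrite mulr1.
case: (l == k') => /=; rewrite mul1r.
  by apply: eq_bigr => j _; rewrite mul1r.
by rewrite -[RHS]hp; apply: eq_bigr => j _; rewrite mulr1.
Qed.

Lemma xi_sum (R : realType) n Q (x : {ffun 'I_Q -> 'I_n}) i :
  @empirical R n Q x i = Q%:R^-1 * \sum_(k < Q) (x k == i)%:R.
Proof.
rewrite /empirical mulrC; congr (_ * _).
rewrite -sumr_const big_mkcond /=; apply: eq_bigr => k _; rewrite inE.
by case: (x k == i).
Qed.

Lemma E_xi (R : realType) n Q (p : 'I_n -> R) (hp : \sum_(j < n) p j = 1)
  (hQ : (0 < Q)%N) i :
  \sum_(x : {ffun 'I_Q -> 'I_n}) W p x * @empirical R n Q x i = p i.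
Proof.
rewrite (eq_bigr (fun x => Q%:R^-1 * \sum_(k < Q) W p x * (x k == i)%:R)); last first.
  by move=> x _; rewrite xi_sum mulrCA mulr_sumr.
rewrite -mulr_sumr exchange_big /=.
rewrite (eq_bigr (fun k => p i)); last first.
  move=> k _; rewrite (sum_one hp k (fun v => (v == i)%:R)).
  exact: sum_delta.
rewrite sumr_const card_ord -[p i *+ Q]mulr_natr mulrCA mulVf ?mulr1 //.
by rewrite pnatr_eq0 -lt0n.
Qed.

Lemma E_xixj (R : realType) n Q (p : 'I_n -> R) (hp : \sum_(j < n) p j = 1)
  (hQ : (0 < Q)%N) i j :
  \sum_(x : {ffun 'I_Q -> 'I_n}) W p x * (@empirical R n Q x i * @empirical R n Q x j)
  = p i * p j + Q%:R^-1 * ((i == j)%:R * p i - p i * p j).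
Proof.
set A := (i == j)%:R * p i; set B := p i * p j.
rewrite (eq_bigr (fun x => Q%:R^-1 * Q%:R^-1 * \sum_(k < Q) \sum_(k' < Q)
      W p x * ((x k == i)%:R * (x k' == j)%:R))); last first.
  move=> x _; rewrite !xi_sum.
  have -> : \sum_(k < Q) \sum_(k' < Q) W p x * ((x k == i)%:R * (x k' == j)%:R)
     = W p x * ((\sum_(k < Q) (x k == i)%:R) * (\sum_(k < Q) (x k == j)%:R)).
    symmetry; rewrite mulr_suml mulr_sumr; apply: eq_bigr => k _.
    rewrite mulr_sumr mulr_sumr; apply: eq_bigr => k' _; by [].
  by ring.
rewrite -mulr_sumr exchange_big /=.
rewrite (eq_bigr (fun k => Q%:R * B + (A - B))); last first.
  move=> k _; rewrite exchange_big /=.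
  rewrite (eq_bigr (fun k' => B + (k' == k)%:R * (A - B))); last first.
    move=> k' _; case: (eqVneq k' k) => [->|kk].
      rewrite (sum_one hp k (fun v => (v == i)%:R * (v == j)%:R)).
      rewrite (eq_bigr (fun v => (p v * (v == j)%:R) * (v == i)%:R)); last first.
        by move=> v _; ring.
      rewrite (sum_delta i (fun v => p v * (v == j)%:R)) /A /B.
      rewrite mulr1n; ring.
    rewrite eq_sym in kk.
    rewrite (sum_two hp kk (fun v => (v == i)%:R) (fun v => (v == j)%:R)).
    by rewrite !sum_delta mulr0n mul0r addr0.
  rewrite big_split /= sumr_const card_ord mulr_natl.
  by rewrite (eq_bigr (fun k' => (A - B) * (k' == k)%:R)) ?sum_delta // => k' _; rewrite mulrC.
rewrite sumr_const card_ord -mulr_natl.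
have hQ0 : Q%:R != 0 :> R by rewrite pnatr_eq0 -lt0n.
by field.
Qed.

Lemma sumM2 (R : realType) n (p : 'I_n -> R) (c : R) :
  \sum_(i < n) \sum_(j < n) (p i * p j + c * ((i == j)%:R * p i - p i * p j))^+2
  = (1 - c)^+2 * (\sum_(i < n) p i ^+ 2) ^+ 2 + 2 * (1 - c) * c * (\sum_(i < n) p i ^+ 3)
    + c^+2 * (\sum_(i < n) p i ^+ 2).
Proof.
set s2 := \sum_(i < n) p i ^+ 2.
rewrite (eq_bigr (fun i => ((1 - c)^+2 * s2) * p i ^+ 2 + (2 * (1 - c) * c) * p i ^+ 3
    + c^+2 * p i ^+ 2)); last first.
  move=> i _; rewrite (bigD1 i) //= eqxx.
  rewrite (eq_bigr (fun j => (1 - c)^+2 * p i ^+ 2 * p j ^+ 2)); last first.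
    move=> j /negbTE; rewrite eq_sym => ->; rewrite mulr0n; ring.
  have hs : s2 = p i ^+ 2 + \sum_(j < n | j != i) p j ^+ 2 by rewrite /s2 (bigD1 i).
  rewrite -mulr_sumr hs; rewrite mulr1n; ring.
rewrite !big_split /= -!mulr_sumr -/s2; ring.
Qed.

Definition L (R : realType) n Q (p : 'I_n -> R)
  (F : {ffun 'I_Q -> 'I_n} -> {ffun 'I_Q -> 'I_n} -> R) : R :=
  \sum_(x : {ffun 'I_Q -> 'I_n}) \sum_(y : {ffun 'I_Q -> 'I_n}) W p x * W p y * F x y.

Lemma L_ext (R : realType) n Q (p : 'I_n -> R) F G :
  (forall x y, F x y = G x y) -> @L R n Q p F = L p G.
Proof. by move=> h; apply: eq_bigr => x _; apply: eq_bigr => y _; rewrite h. Qed.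

Lemma L_add (R : realType) n Q (p : 'I_n -> R) F G :
  @L R n Q p (fun x y => F x y + G x y) = L p F + L p G.
Proof.
rewrite /L -big_split; apply: eq_bigr => x _ /=; rewrite -big_split.
by apply: eq_bigr => y _; rewrite mulrDr.
Qed.

Lemma L_scale (R : realType) n Q (p : 'I_n -> R) a F :
  @L R n Q p (fun x y => a * F x y) = a * L p F.
Proof.
rewrite /L mulr_sumr; apply: eq_bigr => x _; rewrite mulr_sumr.
by apply: eq_bigr => y _; ring.
Qed.

Lemma L_sum (R : realType) n Q (p : 'I_n -> R) (F : 'I_n -> _ -> _ -> R) :
  @L R n Q p (fun x y => \sum_(i < n) F i x y) = \sum_(i < n) L p (F i).
Proof.
rewrite /L [RHS]exchange_big /=; apply: eq_bigr => x _.
rewrite [RHS]exchange_big /=; apply: eq_bigr => y _; by rewrite mulr_sumr.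
Qed.

Lemma L_prod (R : realType) n Q (p : 'I_n -> R) f g :
  @L R n Q p (fun x y => f x * g y)
  = (\sum_(x : {ffun 'I_Q -> 'I_n}) W p x * f x) * (\sum_(y : {ffun 'I_Q -> 'I_n}) W p y * g y).
Proof.
rewrite /L mulr_suml; apply: eq_bigr => x _; rewrite mulr_sumr.
by apply: eq_bigr => y _; ring.
Qed.

Lemma sumW1 (R : realType) n Q (p : 'I_n -> R) (hp : \sum_(j < n) p j = 1) :
  \sum_(x : {ffun 'I_Q -> 'I_n}) W p x = 1.
Proof.
transitivity (\sum_(x : {ffun 'I_Q -> 'I_n}) W p x * \prod_(l < Q) (1:R)).
  by apply: eq_bigr => x _; rewrite big1 ?mulr1.
rewrite (sum_prodh p (fun _ _ => 1)); apply: big1 => l _; rewrite -[RHS]hp; apply: eq_bigr => j _; by rewrite mulr1.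
Qed.

Lemma a_sq (R : realType) (Q : nat) (rho : R) : (0 < Q)%N -> 0 < rho ->
  (2 `^ (7 / 4) * Q%:R `^ (- (1 / 2)) * rho `^ (3 / 2)) ^+ 2
  = 8 * Num.sqrt 2 * rho ^+ 3 * Q%:R^-1.
Proof.
move=> hQ hr.
have sq (x r : R) : 0 <= x -> (x `^ r) ^+ 2 = x `^ (r * 2).
  by move=> h; rewrite -powR_mulrn ?powR_ge0 // -powRrM.
rewrite !exprMn !sq ?ler0n ?(ltW hr) //.
rewrite (_ : 7 / 4 * 2 = 3%:R + 2^-1 :> R); last by field.
rewrite powRD ?pnatr_eq0 ?implybT // powR_mulrn // powR12_sqrt //.
rewrite (_ : - (1 / 2) * 2 = -1 :> R); last by field.
rewrite powR_inv1 ?ler0n //.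
rewrite (_ : 3 / 2 * 2 = 3%:R :> R); last by field.
rewrite powR_mulrn ?(ltW hr) //.
ring.
Qed.
Unset Implicit Arguments. Set Strict Implicit.
Theorem lemma1 (R : realType) (n : nat) (p : 'I_n -> R) (rho : R) (Q : nat) :
  in_simplex p ->
  0 < rho ->
  norm2 p <= Num.sqrt 2 * rho ->
  (0 < Q)%N ->
  3 * (2 `^ (7 / 4) * Q%:R `^ (- (1 / 2)) * rho `^ (3 / 2)
       + 2 * Q%:R^-1 * rho) <= rho ^+ 2 / 3 ->
  iid_pair_prob p
    (fun x y => `|dotp (@empirical R n Q x) (@empirical R n Q y) - norm2 p ^+ 2|
                  > rho ^+ 2 / 3)
  <= 1 / 3.
Proof.
move=> [p0 hp] hr hn hQ hyp.
set s2 := \sum_(i < n) p i ^+ 2.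
set s3 := \sum_(i < n) p i ^+ 3.
have s2ge0 : 0 <= s2 by apply: sumr_ge0 => i _; exact: sqr_ge0.
have s3ge0 : 0 <= s3 by apply: sumr_ge0 => i _; exact: exprn_ge0.
have hm : norm2 p ^+ 2 = s2 by rewrite /norm2 sqr_sqrtr.
have hQ0 : 0 < Q%:R :> R by rewrite ltr0n.
set c := Q%:R^-1 : R.
have c0 : 0 <= c by rewrite invr_ge0 ltW.
have c1 : c <= 1 by rewrite invf_le1 // ler1n.
set t := rho ^+ 2 / 3.
have t0 : 0 < t by rewrite divr_gt0 // exprn_gt0.
pose d := fun x y => dotp (@empirical R n Q x) (@empirical R n Q y) - s2.
have step1 : iid_pair_prob p
    (fun x y => `|dotp (@empirical R n Q x) (@empirical R n Q y) - norm2 p ^+ 2| > t)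
    <= L p (fun x y => t^-2 * d x y ^+ 2).
  rewrite /iid_pair_prob /L hm; apply: ler_sum => x _.
  rewrite big_mkcond /=; apply: ler_sum => y _; rewrite /W.
  have w0 : 0 <= (\prod_(k < Q) p (x k)) * (\prod_(k < Q) p (y k)).
    by apply: mulr_ge0; apply: prodr_ge0.
  case: ifP => H.
    apply: ler_peMr => //.
    rewrite mulrC ler_pdivlMr ?exprn_gt0 // mul1r.
    rewrite -(real_normK (num_real (d x y))) !expr2.
    by apply: ler_pM; rewrite ?(ltW t0) // ltW.
  by apply: mulr_ge0 => //; apply: mulr_ge0; [rewrite invr_ge0 exprn_ge0 // ltW | exact: sqr_ge0].
have hL1 : @L R n Q p (fun _ _ => 1) = 1.
  rewrite (@L_ext R n Q p _ (fun x y => (fun _ => 1) x * (fun _ => 1) y)); last by move=> *; rewrite mulr1.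
  rewrite L_prod.
  under eq_bigr do rewrite mulr1.
  by rewrite sumW1 // mulr1.
pose M := fun i j : 'I_n => p i * p j + c * ((i == j)%:R * p i - p i * p j).
have hE : L p (fun x y => d x y ^+ 2) = \sum_(i < n) \sum_(j < n) M i j ^+ 2 - s2 ^+ 2.
  rewrite (@L_ext R n Q p _ (fun x y => \sum_(i < n) \sum_(j < n) (@empirical R n Q x i * @empirical R n Q x j) * (@empirical R n Q y i * @empirical R n Q y j)
      + (- 2 * s2) * \sum_(i < n) @empirical R n Q x i * @empirical R n Q y i + s2 ^+ 2 * 1)); last first.
    move=> x y.
    have e : \sum_(i < n) \sum_(j < n) (@empirical R n Q x i * @empirical R n Q x j) * (@empirical R n Q y i * @empirical R n Q y j)
        = (\sum_(i < n) @empirical R n Q x i * @empirical R n Q y i) ^+ 2.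
      rewrite expr2 mulr_suml; apply: eq_bigr => i _; rewrite mulr_sumr.
      by apply: eq_bigr => j _; ring.
    by rewrite e /d /dotp; ring.
  rewrite !L_add L_scale L_sum L_scale L_sum hL1.
  under eq_bigr => i _ do rewrite L_sum.
  under eq_bigr => i _ do under eq_bigr => j _ do rewrite L_prod (E_xixj hp hQ) -expr2.
  have Li (i : 'I_n) : L p (fun x y => @empirical R n Q x i * @empirical R n Q y i) = p i ^+ 2.
    transitivity ((\sum_(x : {ffun 'I_Q -> 'I_n}) W p x * @empirical R n Q x i)
                 * (\sum_(x : {ffun 'I_Q -> 'I_n}) W p x * @empirical R n Q x i)).
      exact: (L_prod p (fun x => @empirical R n Q x i) (fun y => @empirical R n Q y i)).
    by rewrite (E_xi hp hQ) expr2.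
  rewrite [X in -2 * s2 * X](eq_bigr (fun i => p i ^+ 2)) -/s2; last by move=> i _; apply: Li.
  rewrite /M; ring.
have hV : \sum_(i < n) \sum_(j < n) M i j ^+ 2 - s2 ^+ 2 <= 2 * c * s3 + c ^+ 2 * s2.
  rewrite /M sumM2 -/s2 -/s3 -subr_ge0.
  have -> : 2 * c * s3 + c ^+ 2 * s2 - ((1 - c) ^+ 2 * s2 ^+ 2 + 2 * (1 - c) * c * s3
     + c ^+ 2 * s2 - s2 ^+ 2) = (c * (2 - c)) * s2 ^+ 2 + 2 * c ^+ 2 * s3 by ring.
  apply: addr_ge0; apply: mulr_ge0; rewrite ?sqr_ge0 ?mulr_ge0 //; lra.
set N := norm2 p.
have N0 : 0 <= N by apply: sqrtr_ge0.
have piN i : p i <= N.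
  rewrite /N /norm2 -(ger0_norm (p0 i)) -sqrtr_sqr ler_sqrt //.
  by rewrite -/s2 /s2 (bigD1 i) //= lerDl; apply: sumr_ge0 => j _; exact: sqr_ge0.
have hs3 : s3 <= N * s2.
  rewrite /s3 /s2 mulr_sumr; apply: ler_sum => i _.
  by rewrite exprS mulrC [N * _]mulrC; apply: ler_wpM2l => //; exact: sqr_ge0.
set r2 := Num.sqrt (2 : R).
have r20 : 0 <= r2 by apply: sqrtr_ge0.
have r22 : r2 ^+ 2 = 2 by rewrite sqr_sqrtr // ler0n.
have hs2 : s2 <= 2 * rho ^+ 2.
  rewrite -hm -r22 -exprMn; apply: ler_pM => //.
have hs3' : s3 <= 2 * r2 * rho ^+ 3.
  apply: (le_trans hs3); rewrite (_ : 2 * r2 * rho ^+ 3 = (r2 * rho) * (2 * rho ^+ 2)); last by ring.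
  by apply: ler_pM.
set a := 2 `^ (7 / 4) * Q%:R `^ (- (1 / 2)) * rho `^ (3 / 2).
have a0 : 0 <= a by rewrite /a !mulr_ge0 ?powR_ge0.
have ha2 : a ^+ 2 = 8 * r2 * rho ^+ 3 * c by rewrite /a a_sq.
have hab : a + 2 * c * rho <= rho ^+ 2 / 9.
  move: hyp; rewrite -/a -/c; lra.
have hVb : 2 * c * s3 + c ^+ 2 * s2 <= rho ^+ 4 / 162.
  have e1 : 2 * c * s3 <= a ^+ 2 / 2.
    rewrite ha2 (_ : 8 * r2 * rho ^+ 3 * c / 2 = 2 * c * (2 * r2 * rho ^+ 3)); last by field.
    by apply: ler_wpM2l => //; rewrite mulr_ge0.
  have e2 : c ^+ 2 * s2 <= (2 * c * rho) ^+ 2 / 2.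
    rewrite (_ : (2 * c * rho) ^+ 2 / 2 = c ^+ 2 * (2 * rho ^+ 2)); last by field.
    by apply: ler_wpM2l => //; exact: sqr_ge0.
  have b0 : 0 <= 2 * c * rho by rewrite !mulr_ge0 // ltW.
  have e3 : (a + 2 * c * rho) ^+ 2 <= (rho ^+ 2 / 9) ^+ 2.
    by rewrite !expr2; apply: ler_pM => //; rewrite addr_ge0.
  have e4 : a ^+ 2 + (2 * c * rho) ^+ 2 <= (a + 2 * c * rho) ^+ 2.
    rewrite -subr_ge0 (_ : _ - _ = 2 * (a * (2 * c * rho))); last by ring.
    by apply: mulr_ge0 => //; apply: mulr_ge0.
  have -> : rho ^+ 4 / 162 = (rho ^+ 2 / 9) ^+ 2 / 2 by field.
  lra.
apply: (le_trans step1).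
rewrite (_ : L p (fun x y => t^-2 * d x y ^+ 2) = t^-2 * L p (fun x y => d x y ^+ 2)); last first.
  exact: (L_scale p (t^-2) (fun x y => d x y ^+ 2)).
rewrite hE.
have tt : t^-2 = 9 / rho ^+ 4.
  by rewrite /t; field; rewrite gt_eqF.
rewrite tt.
have r4 : 0 < rho ^+ 4 by rewrite exprn_gt0.
rewrite mulrC mulrA ler_pdivrMr //.
have : \sum_(i < n) \sum_(j < n) M i j ^+ 2 - s2 ^+ 2 <= rho ^+ 4 / 162 by apply: (le_trans hV).
lra.
Qed.
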